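(* Let $P,Q$ be nonzero coprime integers with $\Delta:=P^2-4Q\neq0$, such that $\alpha/\beta$ is not a root of unity, where $\alpha,\beta$ are the roots of $x^2-Px+Q$. Let $(U_n)$ be the Lucas sequence $U_n=(\alpha^n-\beta^n)/(\alpha-\beta)$. Then for all positive integers $n,k$ with $n\ge k$, \[\mathrm{lcm}\left\{\binom{n}{m}_{\boldsymbol U}:\ 1\le m\le k\right\}=\frac{\mathrm{lcm}(U_{n+1},U_n,\dots,U_{n-k+1})}{|U_{n+1}|}.\]
   Context: $U_0=0$, $U_1=1$, $U_{n+2}=PU_{n+1}-QU_n$. For $n\ge k\ge1$, $\binom{n}{k}_{\boldsymbol U}:=\frac{U_nU_{n-1}\cdots U_{n-k+1}}{U_1U_2\cdots U_k}$. *)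

(* Defs.v *)
From HB Require Import structures.
From mathcomp Require Import all_boot all_order all_algebra all_field.
Set Implicit Arguments. Unset Strict Implicit. Unset Printing Implicit Defensive.
Import Order.TTheory GRing.Theory Num.Theory.
Local Open Scope ring_scope.

Fixpoint lucas_aux (P Q : int) (n : nat) : int * int :=
  match n with
  | O => (0, 1)
  | S m => let: (a, b) := lucas_aux P Q m in (b, P * b - Q * a)
  end.
Definition lucasU (P Q : int) (n : nat) : int := (lucas_aux P Q n).1.

(* It is a classical fact that this quotient is an integer; we define it by
   integer division (exact in the situation of the theorem). *)
Definition lucasnomial (P Q : int) (n k : nat) : int :=
  divz (\prod_(0 <= i < k) lucasU P Q (n - i)%N)
       (\prod_(1 <= i < k.+1) lucasU P Q i).

Definition lcmz_seq (s : seq int) : int := foldr lcmz 1 s.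

(* Main.v *)
Require Import Defs.
From HB Require Import structures.
From mathcomp Require Import all_boot all_order all_algebra all_field.
From mathcomp Require Import ring zify.
Import Order.TTheory GRing.Theory Num.Theory.

Lemma arith1 r x y : 0 < r -> r %| x.+1 -> ~~ (r %| x.+1 + y) -> r <= x %% r + y %% r.
Proof.
move=> r0 /dvdnP [q hq] hn.
have hq0 : 0 < q by case: q hq => //.
have hx : x = (q.-1) * r + r.-1.
  move: hq; case: q hq0 => // q _ hq; rewrite mulSn in hq; rewrite /=; lia.
have -> : x %% r = r.-1.
  by rewrite hx modnMDl modn_small // prednK.
have : y %% r != 0.
  apply: contra hn => /eqP hy; apply: dvdn_add; first by rewrite hq dvdn_mull.
  by rewrite /dvdn hy.
lia.
Qed.

Lemma arith2 r x y : 0 < r -> r %| (x + y).+1 -> x %% r + y %% r < r.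
Proof.
move=> r0 hd.
have hs : r %| (x %% r + y %% r).+1.
  move: hd; rewrite {1}(divn_eq x r) {1}(divn_eq y r).
  have -> : (x %/ r * r + x %% r + (y %/ r * r + y %% r)).+1 = (x %/ r + y %/ r) * r + (x %% r + y %% r).+1 by lia.
  by rewrite dvdn_addr // dvdn_mull.
have hx := ltn_pmod x r0; have hy := ltn_pmod y r0.
move: hs => /dvdnP [k hk].
move: hk; case: k => [|[|k]] hk; rewrite ?mulSn ?mul0n in hk; lia.
Qed.

Lemma arith3 r x y : 0 < r -> r <= x %% r + y %% r -> x < (x + y) %/ r * r.
Proof.
move=> r0 h; rewrite divnD // h.
apply: (leq_trans (ltn_ceil x r0)); by rewrite leq_mul2r /= addn1 ltnS leq_addr orbT.
Qed.

Lemma count_mult r x y : 0 < r ->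
  \sum_(x.+1 <= j < (x + y).+1) (r %| j : nat) + x %/ r = (x + y) %/ r.
Proof.
move=> r0; elim: y => [|y IH]; first by rewrite addn0 big_geq.
rewrite addnS big_nat_recr /=; last by lia.
by rewrite -addnA [(_ %| _) + _]addnC addnA IH (divnS _ r0) addnC.
Qed.

Lemma sum_ind a b B : b <= B ->
  \sum_(t < B) ((a <= t) && (t < b) : nat) = b - a.
Proof.
move=> hb; suff -> : \sum_(t < B) ((a <= t) && (t < b) : nat) = minn B b - a by lia.
clear hb; elim: B => [|B IH]; first by rewrite big_ord0 min0n.
rewrite big_ord_recr /= IH.
by case: (leqP a B) => h1; case: (ltnP B b) => h2 /=; lia.
Qed.

Section Comb.
Variable e : nat -> nat.
Variable n : nat.
Local Notation N := n.+1.
Hypothesis He : forall a b, 0 < a <= N -> 0 < b <= N -> e (gcdn a b) = minn (e a) (e b).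

Definition rr t := (find (fun j => t <= e j) (iota 1 N)).+1.

Lemma rr_gt0 t : 0 < rr t. Proof. by []. Qed.

Lemma rrP t j : 0 < j <= N -> (t <= e j) = (rr t %| j).
Proof.
move=> hj.
case: (boolP (has (fun j => t <= e j) (iota 1 N))) => h.
  have hf := h; rewrite has_find size_iota in hf.
  have hnth := nth_find 0 h; rewrite nth_iota // add1n -/(rr t) in hnth.
  have hmin : forall i, 0 < i < rr t -> e i < t.
    move=> i /andP [i0 ilt].
    have := @before_find _ 0 (fun j => t <= e j) (iota 1 N) i.-1.
    rewrite nth_iota; last by rewrite /rr in ilt; lia.
    rewrite add1n prednK // => H; rewrite ltnNge H //.
  have hr : 0 < rr t <= N by rewrite /rr; lia.
  apply/idP/idP => H.
    set g := gcdn (rr t) j.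
    have g0 : 0 < g by rewrite gcdn_gt0 rr_gt0.
    have gle : g <= rr t by apply: dvdn_leq => //; apply: dvdn_gcdl.
    have eg : t <= e g.
      by rewrite /g He // leq_min hnth H.
    have : g = rr t.
      apply/eqP; rewrite eqn_leq gle /=; rewrite leqNgt; apply/negP => glt.
      by have := hmin g; rewrite g0 glt ltnNge eg => /(_ isT).
    by move/gcdn_idPl.
  have := He _ _ hr hj; rewrite (gcdn_idPl H) => hm.
  apply: (leq_trans hnth); rewrite hm; exact: geq_minr.
have hN : rr t = N.+1 by rewrite /rr hasNfind // size_iota.
rewrite hN; move/hasPn: h => /(_ j); rewrite mem_iota.
have -> : (1 <= j < 1 + N) by lia.
move=> /(_ isT) /negPf ->.
apply/esym/negbTE; apply/negP => /dvdn_leq; lia.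
Qed.

Definition BB := \max_(j < N.+1) e j.

Lemma eB j : j <= N -> e j <= BB.
Proof. by move=> hj; apply: (@leq_bigmax _ (fun j : 'I_N.+1 => e j) (Ordinal (hj : j < N.+1))). Qed.

Definition cc m t := (rr t.+1 <= (n - m) %% rr t.+1 + m %% rr t.+1).
Definition DD m := \sum_(t < BB) (cc m t : nat).

Lemma e_sum j : 0 < j <= N -> e j = \sum_(t < BB) (rr t.+1 %| j : nat).
Proof.
move=> hj; rewrite -[e j]subn0 -(sum_ind 0 (e j) BB); last by apply: eB; lia.
by apply: eq_bigr => t _; rewrite leq0n /= -rrP.
Qed.

Lemma sumI m : m <= n ->
  \sum_((n - m).+1 <= j < N) e j = \sum_(1 <= j < m.+1) e j + DD m.
Proof.
move=> hm.
rewrite (@eq_big_nat _ _ _ _ _ _ (fun j => \sum_(t < BB) (rr t.+1 %| j : nat))); last first.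
  move=> j hj; apply: e_sum; lia.
rewrite [\sum_(1 <= j < m.+1) e j](@eq_big_nat _ _ _ _ _ _ (fun j => \sum_(t < BB) (rr t.+1 %| j : nat))); last first.
  move=> j hj; apply: e_sum; lia.
rewrite exchange_big [X in X + _]exchange_big /DD -big_split /=.
apply: eq_bigr => t _.
have h1 := @count_mult _ (n - m) m (rr_gt0 t.+1); rewrite subnK // in h1.
have h2 := @count_mult _ 0 m (rr_gt0 t.+1); rewrite add0n div0n addn0 in h2.
have h3 := @divnD (n - m) m _ (rr_gt0 t.+1); rewrite subnK // in h3.
rewrite /cc; lia.
Qed.

Lemma lowI i : 0 < i <= n -> e (N - i) <= DD i + e N.
Proof.
move=> hi.
have : e (N - i) - e N <= DD i.
  rewrite -(sum_ind (e N) (e (N - i)) BB); last by apply: eB; lia.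
  apply: leq_sum => t _.
  case/boolP: ((e N <= t) && (t < e (N - i))) => //= /andP [h1 h2].
  have hr : rr t.+1 %| (n - i).+1 by rewrite -rrP -?subSn //; lia.
  have hn : ~~ (rr t.+1 %| (n - i).+1 + i).
    have -> : (n - i).+1 + i = N by lia.
    rewrite -rrP //; lia.
  rewrite lt0b /cc; apply: arith1 => //.
lia.
Qed.

Lemma upI m : 0 < m <= n ->
  DD m + e N <= maxn (\max_((n - m).+1 <= j < N) e j) (e N).
Proof.
move=> hm; have hmn : m <= n by lia.
set M := \max_(_ <= j < _) e j.
have MB : M <= BB.
  apply/bigmax_leqP_seq => j; rewrite mem_index_iota => hj _; apply: eB; lia.
have : DD m <= M - e N.
  rewrite -(sum_ind (e N) M BB) //; apply: leq_sum => t _.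
  case hc : (cc m t) => //=; rewrite lt0b; apply/andP; split.
    rewrite leqNgt; apply/negP => ht.
    have hd : rr t.+1 %| (n - m + m).+1 by rewrite subnK // -rrP //; lia.
    by have := @arith2 _ _ _ (rr_gt0 t.+1) hd; rewrite ltnNge; move: hc; rewrite /cc => ->.
  have h3 := @arith3 _ _ _ (rr_gt0 t.+1) hc; rewrite subnK // in h3.
  set j := n %/ rr t.+1 * rr t.+1 in h3.
  have hjn : j <= n by apply: leq_divM.
  have : t.+1 <= e j by rewrite rrP ?dvdn_mull //; lia.
  move/leq_trans; apply; apply: leq_bigmax_seq => //; rewrite mem_index_iota; lia.
lia.
Qed.

Lemma maxI k : 0 < k <= n ->
  \max_(m <- iota 1 k) DD m + e N = \max_(i <- iota 0 k.+1) e (N - i).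
Proof.
move=> hk; apply/eqP; rewrite eqn_leq; apply/andP; split.
  set ME := \max_(i <- iota 0 k.+1) e (N - i).
  have hEN : e N <= ME.
    have := @leq_bigmax_seq _ (iota 0 k.+1) xpredT (fun i => e (N - i)) 0.
    by rewrite subn0 mem_iota; apply => //; lia.
  have : \max_(m <- iota 1 k) DD m <= ME - e N.
    apply/bigmax_leqP_seq => m; rewrite mem_iota => hm _.
    have hu := upI m _; have hM : \max_((n - m).+1 <= j < N) e j <= ME.
      apply/bigmax_leqP_seq => j; rewrite mem_index_iota => hj _.
      have -> : j = N - (N - j) by lia.
      apply: (@leq_bigmax_seq _ _ xpredT (fun i => e (N - i))) => //; rewrite mem_iota; lia.
    have := hu ltac:(lia); lia.
  lia.
apply/bigmax_leqP_seq => i; rewrite mem_iota => hi _.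
case: i hi => [|i] hi; first by rewrite subn0 leq_addl.
apply: leq_trans (lowI i.+1 _) _; first lia.
rewrite leq_add2r; apply: (@leq_bigmax_seq _ _ xpredT DD) => //; rewrite mem_iota; lia.
Qed.
End Comb.

Lemma logn_prod (p : nat) (I : eqType) (s : seq I) (F : I -> nat) :
  (forall i, i \in s -> 0 < F i) -> logn p (\prod_(i <- s) F i) = \sum_(i <- s) logn p (F i).
Proof.
elim: s => [|x s IH] hF; first by rewrite !big_nil logn1.
have hF' : forall i, i \in s -> 0 < F i by move=> i hi; apply: hF; rewrite inE hi orbT.
rewrite !big_cons lognM ?IH ?hF ?inE ?eqxx //.
by rewrite big_seq_cond; apply: prodn_cond_gt0 => i /andP [hi _]; apply: hF'.
Qed.

Lemma logn_lcmseq (p : nat) (s : seq nat) :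
  (forall x, x \in s -> 0 < x) -> logn p (foldr lcmn 1 s) = \max_(x <- s) logn p x.
Proof.
elim: s => [|x s IH] hs; first by rewrite big_nil logn1.
have hx : 0 < x by apply: hs; rewrite inE eqxx.
have hs' : forall y, y \in s -> 0 < y by move=> y hy; apply: hs; rewrite inE hy orbT.
have hl : 0 < foldr lcmn 1 s.
  elim: s {IH hs} hs' => [|y s IH2] h //=; rewrite lcmn_gt0 h ?inE ?eqxx //= IH2 // => z hz.
  by apply: h; rewrite inE hz orbT.
by rewrite big_cons /= logn_lcm // IH.
Qed.

Lemma lcmz_seqE (s : seq int) : lcmz_seq s = Posz (foldr lcmn 1 (map absz s)).
Proof. by elim: s => [|x s IH] //=; rewrite /lcmz IH. Qed.

Lemma dvdn_from_log d m : 0 < d -> 0 < m -> (forall p, logn p d <= logn p m) -> d %| m.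
Proof.
move=> d0 m0 h; apply/gcdn_idPl; apply: eqn_from_log => //.
  by rewrite gcdn_gt0 d0.
by move=> p; rewrite logn_gcd //; apply/minn_idPl.
Qed.

Lemma sum_rev (f : nat -> nat) n m : m <= n ->
  \sum_(0 <= i < m) f (n - i) = \sum_((n - m).+1 <= j < n.+1) f j.
Proof.
elim: m => [|m IH] hm; first by rewrite subn0 !big_geq.
rewrite big_nat_recr //= IH; last by lia.
rewrite [in RHS](@big_ltn _ _ _ (n - m.+1).+1); last by lia.
have -> : (n - m.+1).+1 = n - m by lia.
by rewrite addnC.
Qed.


Local Open Scope ring_scope.

Section Lucas.
Variables P Q : int.
Local Notation U := (lucasU P Q).

Lemma lucas_auxE n : lucas_aux P Q n = (U n, U n.+1).
Proof.
elim: n => [//|n IH].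
by rewrite /= IH /lucasU /= IH.
Qed.

Lemma U0 : U 0 = 0. Proof. by []. Qed.
Lemma U1 : U 1 = 1. Proof. by []. Qed.
Lemma Urec n : U n.+2 = P * U n.+1 - Q * U n.
Proof. by rewrite {1}/lucasU /= lucas_auxE. Qed.

Lemma Uadd m n : U (m + n).+1 = U m.+1 * U n.+1 - Q * U m * U n.
Proof.
suff H : U (m + n).+1 = U m.+1 * U n.+1 - Q * U m * U n /\
                  U (m + n.+1).+1 = U m.+1 * U n.+2 - Q * U m * U n.+1 by case: H.
elim: n => [|n [IH1 IH2]].
  rewrite addn0 addn1 Urec (Urec 0) U0 U1; split; ring.
split; first exact: IH2.
rewrite addnS Urec IH2 addnS IH1 [U n.+3]Urec [U n.+2]Urec; ring.
Qed.

Hypothesis cPQ : coprimez P Q.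

Lemma coprime_UQ n : coprimez Q (U n.+1).
Proof.
elim: n => [|n IH]; first by rewrite U1 /coprimez /gcdz gcdn1.
have -> : U n.+2 = (- U n) * Q + P * U n.+1 by rewrite Urec; ring.
rewrite /coprimez gcdzMDl -/(coprimez _ _) coprimezMr IH andbT.
by rewrite coprimez_sym.
Qed.

Lemma coprime_UU n : coprimez (U n) (U n.+1).
Proof.
elim: n => [|n IH]; first by rewrite U0 U1 /coprimez /gcdz gcd0n.
have -> : U n.+2 = P * U n.+1 + (- (Q * U n)) by rewrite Urec.
rewrite /coprimez gcdzMDl -/(coprimez _ _) coprimezN coprimezMr.
by rewrite coprimez_sym coprime_UQ /= coprimez_sym.
Qed.

Lemma Ueuclid m n : gcdz (U n.+1) (U (m + n).+1) = gcdz (U n.+1) (U m).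
Proof.
rewrite Uadd.
rewrite gcdzMDl.
have -> : - (Q * U m * U n) = - (Q * U n) * U m by ring.
rewrite Gauss_gcdzr // coprimezN coprimezMr coprimez_sym coprime_UQ /=.
by rewrite coprimez_sym coprime_UU.
Qed.

Lemma Ugcd a b : gcdz (U a) (U b) = `|U (gcdn a b)|%:Z.
Proof.
suff H : forall s a b, (a + b <= s)%N -> gcdz (U a) (U b) = `|U (gcdn a b)|%:Z.
  exact: (H _ _ _ (leqnn _)).
clear a b; elim=> [|s IH] a b.
  move=> H; have -> : a = 0%N by lia. have -> : b = 0%N by lia. by rewrite U0 gcdz0.
case: b => [|b]; first by move=> _; rewrite gcdn0 U0 gcdz0.
case: a => [|a]; first by move=> _; rewrite gcd0n U0 gcd0z.
move=> Hs.
case: (leqP b a) => Hab.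
  have -> : a.+1 = ((a - b) + b).+1 by rewrite subnK.
  rewrite gcdzC Ueuclid IH; last by lia.
  by rewrite [gcdn _.+1 b.+1]gcdnC -addnS gcdnDr.
have -> : b.+1 = ((b - a) + a).+1 by rewrite subnK // ltnW.
rewrite Ueuclid IH; last by lia.
by rewrite -addnS gcdnDr.
Qed.

End Lucas.

Lemma binet (P Q : int) (al be : algC) :
  al + be = P%:~R -> al * be = Q%:~R ->
  forall n, (lucasU P Q n)%:~R * (al - be) = al ^+ n - be ^+ n.
Proof.
move=> hs hp.
suff H : forall n, (lucasU P Q n)%:~R * (al - be) = al ^+ n - be ^+ n /\
                   (lucasU P Q n.+1)%:~R * (al - be) = al ^+ n.+1 - be ^+ n.+1.
  by move=> n; case: (H n).
elim=> [|n [IH1 IH2]].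
  by rewrite U0 U1 !expr0 !expr1 subrr mul0r mul1r.
split=> //.
rewrite Urec intrB !intrM mulrBl -!mulrA IH1 IH2 -hs -hp.
rewrite !exprS; ring.
Qed.

Lemma U_neq0 (P Q : int) : Q != 0 -> P ^+ 2 - 4 * Q != 0 ->
  (forall alpha beta : algC,
     alpha + beta = P%:~R -> alpha * beta = Q%:~R ->
     forall m : nat, (0 < m)%N -> (alpha / beta) ^+ m != 1) ->
  forall n, lucasU P Q n.+1 != 0.
Proof.
move=> hQ hD hr n.
pose d : algC := sqrtC ((P ^+ 2 - 4 * Q)%:~R).
have hd : d ^+ 2 = (P ^+ 2 - 4 * Q)%:~R by rewrite sqrtCK.
pose al := (P%:~R + d) / 2; pose be := (P%:~R - d) / 2.
have hs : al + be = P%:~R by rewrite /al /be; (field; rewrite ?pnatr_eq0 //).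
have hp : al * be = Q%:~R.
  rewrite /al /be.
  have -> : (P%:~R + d) / 2 * ((P%:~R - d) / 2) = ((P%:~R) ^+ 2 - d ^+ 2) / 4 :> algC by (field; rewrite ?pnatr_eq0 //).
  rewrite hd intrB intrM rmorphXn /=; (field; rewrite ?pnatr_eq0 //).
have hbe : be != 0.
  apply/eqP=> hb; move: hp; rewrite hb mulr0 => /esym/eqP.
  by rewrite intr_eq0 (negPf hQ).
have hab : al - be != 0.
  have -> : al - be = d by rewrite /al /be; (field; rewrite ?pnatr_eq0 //).
  apply/eqP=> h0; move: hd; rewrite h0 expr0n /= => /esym/eqP.
  by rewrite intr_eq0 (negPf hD).
apply/eqP=> hU.
have := @binet P Q al be hs hp n.+1; rewrite hU mul0r => /esym/eqP; rewrite subr_eq0 => /eqP h.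
have := hr _ _ hs hp n.+1 isT.
by rewrite expr_div_n h divff ?eqxx //; exact: expf_neq0.
Qed.

Theorem corollary4 (P Q : int) :
  P != 0 -> Q != 0 -> coprimez P Q -> P ^+ 2 - 4 * Q != 0 ->
  (forall alpha beta : algC,
     alpha + beta = P%:~R -> alpha * beta = Q%:~R ->
     forall m : nat, (0 < m)%N -> (alpha / beta) ^+ m != 1) ->
  forall n k : nat, (0 < k)%N -> (k <= n)%N ->
    ((lcmz_seq [seq lucasnomial P Q n m | m <- iota 1 k])%:~R : rat)
    = (lcmz_seq [seq lucasU P Q (n.+1 - i)%N | i <- iota 0 k.+1])%:~R
      / (`|lucasU P Q n.+1|)%:~R.
Proof.
move=> hP hQ cPQ hD hr n k k0 kn.
Local Open Scope nat_scope.
pose a j := `|lucasU P Q j|%N.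
have a0 : forall j, 0 < j -> 0 < a j.
  by case=> // j _; rewrite /a absz_gt0; apply: U_neq0.
have ag : forall j l, gcdn (a j) (a l) = a (gcdn j l).
  by move=> j l; have := @Ugcd P Q cPQ j l; rewrite /gcdz => [[]].
pose e p j := logn p (a j).
have He : forall p, forall x y, 0 < x <= n.+1 -> 0 < y <= n.+1 ->
    e p (gcdn x y) = minn (e p x) (e p y).
  move=> p x y hx hy; rewrite /e -ag logn_gcd //; apply: a0; lia.
pose num m := (\prod_(0 <= i < m) lucasU P Q (n - i))%R.
pose den m := (\prod_(1 <= i < m.+1) lucasU P Q i)%R.
have anum : forall m, `|num m| = \prod_(0 <= i < m) a (n - i).
  by move=> m; rewrite /num (big_morph absz abszM (erefl (absz 1))).
have aden : forall m, `|den m| = \prod_(1 <= i < m.+1) a i.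
  by move=> m; rewrite /den (big_morph absz abszM (erefl (absz 1))).
have pnum : forall m, m <= n -> 0 < \prod_(0 <= i < m) a (n - i).
  move=> m hm; rewrite big_seq_cond; apply: prodn_cond_gt0 => i.
  rewrite mem_index_iota => /andP [hi _]; apply: a0; lia.
have pden : forall m, 0 < \prod_(1 <= i < m.+1) a i.
  move=> m; rewrite big_seq_cond; apply: prodn_cond_gt0 => i.
  rewrite mem_index_iota => /andP [hi _]; apply: a0; lia.
have key : forall p m, m <= n ->
    logn p (\prod_(0 <= i < m) a (n - i)) =
    logn p (\prod_(1 <= i < m.+1) a i) + DD (e p) n m.
  move=> p m hm.
  rewrite !logn_prod; first last.
    by move=> i; rewrite mem_index_iota => hi; apply: a0; lia.
    by move=> i; rewrite mem_index_iota => hi; apply: a0; lia.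
  have := @sum_rev (e p) n m hm; rewrite /e => ->.
  exact: (@sumI (e p) n (He p) m hm).
have hA : forall m, m <= n ->
    (`|lucasnomial P Q n m| * \prod_(1 <= i < m.+1) a i = \prod_(0 <= i < m) a (n - i))%N.
  move=> m hm.
  have hdiv : (den m %| num m)%Z.
    rewrite dvdzE anum aden; apply: dvdn_from_log => [||p]; rewrite ?pnum ?pden //.
    by rewrite key // leq_addr.
  rewrite -anum -aden -abszM /lucasnomial -/(num m) -/(den m) divzK //.
have Apos : forall m, m <= n -> 0 < `|lucasnomial P Q n m|.
  move=> m hm; rewrite lt0n; apply/eqP => h0; move: (hA m hm).
  by rewrite h0 mul0n => h; move: (pnum m hm); rewrite -h.
have hlog : forall p m, m <= n -> logn p `|lucasnomial P Q n m| = DD (e p) n m.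
  move=> p m hm; have := key p m hm; rewrite -(hA m hm) lognM ?Apos //; lia.
rewrite !lcmz_seqE -!map_comp.
set L := foldr lcmn 1 _.
set R := foldr lcmn 1 _.
have Lpos : forall x, x \in [seq (absz \o lucasnomial P Q n) m | m <- iota 1 k] -> 0 < x.
  move=> x /mapP [m]; rewrite mem_iota => hm ->; apply: Apos; lia.
have Rpos : forall x, x \in [seq (absz \o (fun i => lucasU P Q (n.+1 - i))) i | i <- iota 0 k.+1] -> 0 < x.
  move=> x /mapP [i]; rewrite mem_iota => hi -> /=; apply: a0; lia.
have lcm_pos : forall s, (forall x, x \in s -> 0 < x) -> 0 < foldr lcmn 1 s.
  elim=> [|y s IH2] h //=; rewrite lcmn_gt0 h ?inE ?eqxx //= IH2 // => z hz.
  by apply: h; rewrite inE hz orbT.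
have hLR : (L * a n.+1)%N = R.
  apply: eqn_from_log.
  - by rewrite muln_gt0 lcm_pos // a0.
  - exact: lcm_pos.
  move=> p.
  rewrite lognM ?lcm_pos ?a0 // !logn_lcmseq // !big_map.
  rewrite (eq_big_seq (fun m => DD (e p) n m)); last first.
    move=> m; rewrite mem_iota => hm /=; apply: hlog; lia.
  have := @maxI (e p) n (He p) k ltac:(lia); rewrite /e => ->.
  by [].
have hN : ((a n.+1)%:R != (0 : rat))%R by rewrite pnatr_eq0 -lt0n a0.
rewrite -hLR -natr_absz -/(a n.+1).
rewrite -[((Posz L)%:~R : rat)%R]/(L%:R)%R -[((Posz (L * a n.+1))%:~R : rat)%R]/((L * a n.+1)%:R)%R.
by rewrite natrM mulfK.
Qed.
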